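(* For integers $n>1$ and even $m>3$, $\chi_{ld}(W_m[\overline{K_{n}}])=3$.
   Context: All graphs are finite, simple and undirected. For a graph $G=(V,E)$ of order $N$ without isolated vertices, a bijection $f\colon V\to\{1,2,\dots,N\}$ is a local distance antimagic labeling if $w(u)\neq w(v)$ for every edge $uv$, where $w(u)=\sum_{x\in N(u)}f(x)$ and $N(u)$ is the open neighborhood of $u$. $\chi_{ld}(G)$ is the minimum number of distinct weights over all local distance antimagic labelings of $G$. The wheel $W_m=C_m+K_1$ is the cycle $C_m$ together with a central vertex adjacent to all cycle vertices. $\overline{K_n}$ is the edgeless graph on $n$ vertices. The lexicographic product $G[H]$ has vertex set $V(G)\times V(H)$, with $(g,h)$ adjacent to $(g',h')$ iff $gg'\in E(G)$, or $g=g'$ and $hh'\in E(H)$. *)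

(* Defs.v *)
From mathcomp Require Import all_boot.
Set Implicit Arguments. Unset Strict Implicit. Unset Printing Implicit Defensive.

Definition simple_graph (T : finType) (e : rel T) : Prop :=
  symmetric e /\ irreflexive e.

Definition ld_weight (T : finType) (e : rel T) (f : T -> nat) (u : T) : nat :=
  \sum_(x | e u x) f x.

Definition is_bij_labeling (T : finType) (f : T -> nat) : Prop :=
  injective f /\ (forall x, 1 <= f x <= #|T|).

Definition local_distance_antimagic (T : finType) (e : rel T) (f : T -> nat) : Prop :=
  is_bij_labeling f /\ (forall u v, e u v -> ld_weight e f u != ld_weight e f v).

Definition num_weights (T : finType) (e : rel T) (f : T -> nat) : nat :=
  size (undup [seq ld_weight e f u | u <- enum T]).

Definition chi_ld_is (T : finType) (e : rel T) (k : nat) : Prop :=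
  (exists f, local_distance_antimagic e f /\ num_weights e f = k) /\
  (forall f, local_distance_antimagic e f -> k <= num_weights e f).

Definition cycle_rel (m : nat) : rel 'I_m :=
  fun i j => (val j == (val i).+1 %% m) || (val i == (val j).+1 %% m).

(* wheel W_m = C_m + K_1 on option 'I_m, None being the centre *)
Definition wheel_rel (m : nat) : rel (option 'I_m) :=
  fun x y => match x, y with
             | None, None => false
             | None, Some _ | Some _, None => true
             | Some i, Some j => cycle_rel i j
             end.

Definition empty_rel (n : nat) : rel 'I_n := fun _ _ => false.

Definition lex_rel (A B : finType) (eG : rel A) (eH : rel B) : rel (A * B) :=
  fun x y => eG x.1 y.1 || ((x.1 == y.1) && eH x.2 y.2).

(* Main.v *)
Require Import Defs.
From mathcomp Require Import all_boot zify.

Lemma big_opt (T : finType) (P : pred (option T)) (F : option T -> nat) :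
  \sum_(a | P a) F a = (if P None then F None else 0) + \sum_(i | P (Some i)) F (Some i).
Proof.
rewrite (bigID (fun a => a == None)) /=; congr (_ + _).
  case: ifP => PN.
    by rewrite (big_pred1 None) // => -[a|] /=; rewrite ?andbF ?andbT ?PN.
  by rewrite big_pred0 // => -[a|] /=; rewrite ?andbF ?andbT ?PN.
rewrite (reindex_omap Some id) /=; last by case=> [a|] //= /andP[] _ /negP.
by apply: eq_bigl => i; rewrite eqxx !andbT.
Qed.

Definition col m (a : option 'I_m) : nat := if a is Some i then i.+1 else 0.
Definition Hp m c := if c == 0 then 0 else if odd c then m - c else m.+2 - c.
Definition Pp m c := if c == 0 then 0 else if odd c then m./2 - c./2 else m.+1 - c./2.
Definition rowp m n j c :=
  if odd n && (j < 2) then Pp m c else if odd j then Hp m c else c.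
Definition lab m n (x : option 'I_m * 'I_n) : nat :=
  x.2 * m.+1 + rowp m n x.2 (col m x.1) + 1.
Definition cs m n c := \sum_(j < n) (j * m.+1 + rowp m n j c + 1).

Lemma weight_eq m n u :
  ld_weight (lex_rel (@wheel_rel m) (@empty_rel n)) (lab m n) u =
  \sum_(a | wheel_rel u.1 a) cs m n (col m a).
Proof.
rewrite /ld_weight /lex_rel /empty_rel.
under eq_bigl => x do rewrite andbF orbF -[wheel_rel _ _]andbT.
rewrite -(pair_big_dep (fun a => wheel_rel u.1 a) (fun _ _ => true) (fun a j => lab m n (a, j))) /=.
by apply: eq_bigr.
Qed.

Lemma sum_pairs m n c t p : ~~ odd t -> (odd n -> 2 <= t) ->
  \sum_(0 <= j < t + 2*p) rowp m n j c = \sum_(0 <= j < t) rowp m n j c + p * (c + Hp m c).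
Proof.
move=> et ht; elim: p => [|p IH]; first by rewrite muln0 addn0 mul0n addn0.
have -> : t + 2 * p.+1 = (t + 2*p).+2 by lia.
rewrite big_nat_recr /= ?big_nat_recr /=; try lia.
rewrite IH /rowp /=.
have h1 : odd n && (t + 2*p < 2) = false by case: (odd n) ht => // /(_ isT); lia.
have h2 : odd n && ((t + 2*p).+1 < 2) = false by case: (odd n) ht => // /(_ isT); lia.
rewrite h1 h2 oddD oddM /= (negbTE et) /=.
lia.
Qed.

Definition g m n (b : bool) :=
  if odd n then (if b then m.+1 else 2*m.+1) + (n./2 - 1) * (if b then m else m.+2)
  else n./2 * (if b then m else m.+2).

Lemma R_eq m n c : 0 < c <= m -> ~~ odd m -> 1 < n ->
  \sum_(j < n) rowp m n j c = g m n (odd c).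
Proof.
move=> hc em hn.
have eH : c + Hp m c = if odd c then m else m.+2.
  rewrite /Hp; have := odd_double_half c; have := odd_double_half m.
  rewrite (negbTE em) -!muln2; case: (odd c) => /=; case: eqP; lia.
have eP : 2 * Pp m c + c = if odd c then m.+1 else 2*m.+1.
  rewrite /Pp; have := odd_double_half c; have := odd_double_half m.
  rewrite (negbTE em) -!muln2; case: (odd c) => /=; case: eqP; lia.
rewrite -(big_mkord xpredT (fun j => rowp m n j c)) /g.
case On: (odd n).
  have en : n = (2 + 2 * (n./2 - 1)).+1.
    by move: (odd_double_half n); rewrite On -muln2; lia.
  rewrite [in X in \sum_(0 <= j < X) _]en big_nat_recr /=; last lia.
  rewrite sum_pairs ?On //.
  rewrite !big_nat_recr //= big_nil /rowp.
  rewrite !On /= oddD oddM /=.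
  idtac.
  rewrite -eP -eH; lia.
have en : n = 0 + 2 * (n./2).
  by move: (odd_double_half n); rewrite On -muln2; lia.
rewrite [in X in \sum_(0 <= j < X) _]en.
by rewrite sum_pairs ?On // big_geq // add0n -eH.
Qed.
Set Implicit Arguments. Unset Strict Implicit.

Definition A0 m n := \sum_(j < n) (j * m.+1 + 1).

Lemma rowp0 m n j : rowp m n j 0 = 0.
Proof. by rewrite /rowp /Pp /Hp /=; case: ifP => //; case: ifP. Qed.

Lemma cs_split m n c : cs m n c = A0 m n + \sum_(j < n) rowp m n j c.
Proof.
rewrite /cs /A0 -big_split /=; apply: eq_bigr => j _; lia.
Qed.

Lemma cs0 m n : cs m n 0 = A0 m n.
Proof. by rewrite cs_split (eq_bigr (fun _ => 0)) ?big1 ?addn0 // => j _; rewrite rowp0. Qed.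

Lemma csc m n c : 0 < c <= m -> ~~ odd m -> 1 < n -> cs m n c = A0 m n + g m n (odd c).
Proof. by move=> *; rewrite cs_split R_eq. Qed.

Lemma A0_pos m n : 0 < n -> 0 < A0 m n.
Proof. by case: n => // n _; rewrite /A0 big_ord_recl /=; lia. Qed.

Lemma g_lt m n : 3 < m -> 1 < n -> g m n true < g m n false.
Proof. rewrite /g => hm hn; case: ifP => On; nia. Qed.

Lemma g_le2 m n : 3 < m -> 1 < n -> g m n false <= 2 * g m n true.
Proof. rewrite /g => hm hn; case: ifP => On; nia. Qed.

Lemma valS m (i : 'I_m) : val (ordS i) = if i.+1 == m then 0 else i.+1.
Proof.
rewrite /=; case: eqP => [->|h]; first by rewrite modnn.
by rewrite modn_small //; have := ltn_ord i; lia.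
Qed.

Lemma valP m (i : 'I_m) : val (ord_pred i) = if (i : nat) == 0 then m.-1 else i.-1.
Proof.
have := ltn_ord i; rewrite /=; case: eqP => [->|h] hi.
  by rewrite add0n modn_small //; lia.
have -> : (i + m).-1 = (i.-1) + m by lia.
by rewrite modnDr modn_small //; lia.
Qed.

Lemma cycle_relE m (i j : 'I_m) : cycle_rel i j = (j == ordS i) || (j == ord_pred i).
Proof.
rewrite /cycle_rel; congr orb.
apply/eqP/eqP => [h|->]; last by rewrite -{1}(ord_predK i).
have : i = ordS j by apply: val_inj.
by move=> ->; rewrite ordSK.
Qed.

Lemma nbr_sum m (i : 'I_m) (F : 'I_m -> nat) : 3 <= m ->
  \sum_(j | cycle_rel i j) F j = F (ordS i) + F (ord_pred i).
Proof.
move=> hm.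
have ne : ordS i != ord_pred i.
  apply/eqP => /(congr1 val); rewrite valS valP; have := ltn_ord i.
  by case: eqP; case: eqP; lia.
under eq_bigl => j do rewrite cycle_relE.
rewrite (bigD1 (ordS i)) /= ?eqxx //; congr (_ + _).
rewrite (big_pred1 (ord_pred i)) // => j /=.
by case: eqVneq => [->|_] /=; rewrite ?andbF ?andbT ?(negbTE ne).
Qed.

Lemma odd_ordS m (i : 'I_m) : ~~ odd m -> odd (ordS i).+1 = odd i.
Proof.
move=> em; rewrite valS; have := ltn_ord i; case: eqP => [h|h] hi //=.
have : ~~ odd i.+1 by rewrite h.
  by rewrite /= negbK => ->.
by rewrite negbK.
Qed.

Lemma odd_ordP m (i : 'I_m) : ~~ odd m -> odd (ord_pred i).+1 = odd i.
Proof.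
move=> em; rewrite valP; have := ltn_ord i; case: eqP => [h|h] hi /=.
  move: em; rewrite {1}(_ : m = m.-1.+1); last lia.
  by rewrite /= negbK h => ->.
have e : (i : nat) = i.-1.+1 by lia.
by rewrite {2}e.
Qed.
Set Implicit Arguments. Unset Strict Implicit.

Definition Wc m n := \sum_(i < m) cs m n i.+1.
Definition Wv m n b := cs m n 0 + 2 * (A0 m n + g m n b).

Lemma weightE m n u : 3 < m -> ~~ odd m -> 1 < n ->
  ld_weight (lex_rel (@wheel_rel m) (@empty_rel n)) (lab m n) u =
  if u.1 is Some i then Wv m n (odd i) else Wc m n.
Proof.
move=> hm em hn; rewrite weight_eq big_opt.
case: u => [[i|] j] /=.
  rewrite (nbr_sum i (fun j => cs m n j.+1)); last lia.
  rewrite /Wv cs0 !csc ?odd_ordS ?odd_ordP //; try (apply/andP; split => //; exact: ltn_ord).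
  lia.
by rewrite add0n.
Qed.

Lemma Wv_lt m n b : 3 < m -> ~~ odd m -> 1 < n -> Wv m n b < Wc m n.
Proof.
move=> hm em hn.
have h1 : m * (A0 m n + g m n true) <= Wc m n.
  rewrite /Wc -[m in m * _]card_ord -sum_nat_const.
  apply: leq_sum => i _; rewrite csc //; last by apply/andP; split => //; exact: ltn_ord.
  rewrite leq_add2l; case: (odd _) => //; exact: ltnW (g_lt hm hn).
have h2 := g_lt hm hn; have h3 := g_le2 hm hn; have h4 := A0_pos m (ltnW hn).
rewrite /Wv cs0; case: b; nia.
Qed.

Ltac halves c c' m em :=
  move: (odd_double_half c) (odd_double_half c') (odd_double_half m);
  rewrite (negbTE em) -!muln2.

Lemma rowp_le m n j c : c <= m -> ~~ odd m -> rowp m n j c <= m.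
Proof.
move=> hc em; rewrite /rowp /Pp /Hp.
case: (eqVneq c 0) => [->|c0] /=; first by case: ifP => _; [|case: ifP => _].
move: (odd_double_half c) (odd_double_half m); rewrite (negbTE em) -!muln2.
case: ifP => _; [|case: ifP => _]; case: (odd c) => /=; lia.
Qed.

Lemma rowp_inj m n j c c' : c <= m -> c' <= m -> ~~ odd m ->
  rowp m n j c = rowp m n j c' -> c = c'.
Proof.
move=> hc hc' em; rewrite /rowp /Pp /Hp.
case: (eqVneq c 0) => [->|c0]; case: (eqVneq c' 0) => [->|c0'] //=;
 halves c c' m em;
 case: ifP => _; [|case: ifP => _| |case: ifP => _| |case: ifP => _]; rewrite /=;
 case: (odd c); case: (odd c') => /=; lia.
Qed.

Lemma col_le m (a : option 'I_m) : col m a <= m.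
Proof. by case: a => //= i; exact: ltn_ord. Qed.

Lemma lab_inj m n : ~~ odd m -> injective (lab m n).
Proof.
move=> em [a j] [a' j']; rewrite /lab /= => e.
have r1 := rowp_le n j (col_le a) em; have r2 := rowp_le n j' (col_le a') em.
have ej : (j : nat) = j'.
  have := congr1 (fun x => x.-1 %/ m.+1) e => /=.
  rewrite !addn1 /= !divnMDl // !divn_small ?addn0 //; lia.
have ej' : j = j' by apply: val_inj.
subst j'.
have er : rowp m n j (col m a) = rowp m n j (col m a') by lia.
have := rowp_inj (col_le a) (col_le a') em er.
case: a {e er r1} => [i|]; case: a' {r2} => [i'|] //= h.
by congr (Some _, _); apply: val_inj; case: h.
Qed.
Set Implicit Arguments. Unset Strict Implicit.

Theorem mainTheorem19 (n m : nat) :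
  1 < n -> 3 < m -> ~~ odd m ->
  chi_ld_is (lex_rel (@wheel_rel m) (@empty_rel n)) 3.
Proof.
move=> hn hm em.
have n0 : 0 < n by lia.
have m0 : 0 < m by lia.
have m1 : 1 < m by lia.
pose j0 : 'I_n := Ordinal n0.
pose i0 : 'I_m := Ordinal m0.
pose i1 : 'I_m := Ordinal m1.
set e := lex_rel _ _.
have wE := weightE (n:=n) _ hm em hn.
have lt := g_lt hm hn.
have W01 : Wv m n false != Wv m n true by rewrite /Wv; apply/eqP; lia.
have Wc0 : Wc m n != Wv m n false by apply/eqP => h; have := Wv_lt false hm em hn; lia.
have Wc1 : Wc m n != Wv m n true by apply/eqP => h; have := Wv_lt true hm em hn; lia.
split.
  exists (lab m n); split; first split; first split.
  - exact: lab_inj.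
  - move=> [a j]; rewrite /lab !card_prod card_option !card_ord /=.
    have := rowp_le n j (col_le a) em; have := ltn_ord j; nia.
  - move=> [[i|] j] [[i'|] j'] //; rewrite /e /lex_rel /empty_rel /= ?andbF ?orbF => h;
      rewrite !wE /=.
    + have h1 : odd (ordS i) = ~~ odd i by rewrite -(odd_ordS i em) oddS negbK.
      have h2 : odd (ord_pred i) = ~~ odd i by rewrite -(odd_ordP i em) oddS negbK.
      move: h; rewrite cycle_relE => /orP[] /eqP ->; rewrite ?h1 ?h2; by case: (odd i); rewrite // eq_sym.
    + by rewrite eq_sym; case: (odd i).
    + by case: (odd i').
  rewrite /num_weights; set s := undup _.
  have -> : size s = size [:: Wc m n; Wv m n false; Wv m n true].
    apply: perm_size; apply: uniq_perm; first exact: undup_uniq.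
      by rewrite /= !inE negb_or Wc0 Wc1 W01.
    move=> x; rewrite mem_undup; apply/mapP/idP.
      by case=> [[[i|] j]] _ ->; rewrite wE /= !inE ?eqxx ?orbT //; case: (odd i); rewrite eqxx ?orbT.
    rewrite !inE => /or3P[] /eqP ->.
    + by exists (None, j0); rewrite ?mem_enum // wE.
    + by exists (Some i0, j0); rewrite ?mem_enum // wE.
    + by exists (Some i1, j0); rewrite ?mem_enum // wE.
  by [].
move=> f [_ hf].
rewrite /num_weights.
set w := ld_weight e f.
have e01 : e (None, j0) (Some i0, j0) by [].
have e02 : e (None, j0) (Some i1, j0) by [].
have e12 : e (Some i0, j0) (Some i1, j0).
  by rewrite /e /lex_rel /= /cycle_rel /= modn_small.
set s := undup _.
apply: (uniq_leq_size (s1 := [:: w (None, j0); w (Some i0, j0); w (Some i1, j0)])).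
  by rewrite /= !inE negb_or (hf _ _ e01) (hf _ _ e02) (hf _ _ e12).
by move=> x; rewrite !inE mem_undup => /or3P[] /eqP ->; apply: map_f; rewrite mem_enum.
Qed.
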